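(* Let $\mathcal{X}$ be a connected $n$-premaniplex and let $(\mathcal{Y},\eta)$ be an $(n,m)$-voltage operator that preserves connectivity. Let $\gamma\in\operatorname{Aut}(\mathcal{X}\rtimes_\eta\mathcal{Y})$ be such that for every flag $(x,y)$ of $\mathcal{X}\rtimes_\eta\mathcal{Y}$, the $\mathcal{Y}$-coordinate of $(x,y)\gamma$ is $y$. Then there is an automorphism $\alpha\in\operatorname{Aut}(\mathcal{X})$ such that $(x,y)\gamma=(x\alpha,y)$ for all $(x,y)\in\mathcal{X}\times\mathcal{Y}$; that is, $\gamma$ may be regarded as an automorphism of $\mathcal{X}$.
   Context: A graph has a set of vertices and a set of darts, each dart $d$ having a starting vertex and an inverse dart $d^{-1}$ (an involution; semi-edges $d=d^{-1}$ and parallel edges are allowed). An $n$-premaniplex is a graph whose edges are coloured with $\{0,\dots,n-1\}$ such that every vertex (called a flag) is the start of exactly one dart of each colour, and for $|i-j|\ge 2$ every alternating path of length 4 with colours $i,j$ is closed. For a flag $x$, $x^i$ denotes the end of the $i$-dart at $x$. The universal Coxeter group $\mathcal{C}^n=\langle r_0,\dots,r_{n-1}\mid r_i^2=1,\ (r_ir_j)^2=1 \text{ for } |i-j|\ge2\rangle$ acts on the left on the flags of any $n$-premaniplex by $r_ix=x^i$. A homomorphism of premaniplexes preserves $i$-adjacency for every $i$; automorphisms act on the right, so $(\omega x)\gamma=\omega(x\gamma)$ for every $\omega\in\mathcal{C}^n$. For a flag $y$ of an $m$-premaniplex $\mathcal{Y}$ and $\omega\in\mathcal{C}^m$, $W_\omega(y)$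 denotes the homotopy class of paths starting at $y$ whose colours $i_1,\dots,i_k$ (in order) satisfy $r_{i_k}\cdots r_{i_1}=\omega$ (two paths are homotopic if they have the same start and the same associated element); it ends at $\omega y$. These classes form the fundamental groupoid $\Pi(\mathcal{Y})$ under concatenation, and $\Pi^y(\mathcal{Y})$ is the group of closed ones at $y$. A voltage assignment is $\eta:\Pi(\mathcal{Y})\to\mathcal{C}^n$ with $\eta(W_1W_2)=\eta(W_2)\eta(W_1)$ whenever $W_1W_2$ is defined; $(\mathcal{Y},\eta)$ with $\mathcal{Y}$ an $m$-premaniplex is an $(n,m)$-voltage operator. For an $n$-premaniplex $\mathcal{X}$, $\mathcal{X}\rtimes_\eta\mathcal{Y}$ is the $m$-premaniplex with flag set $\mathcal{X}\times\mathcal{Y}$ and $(x,y)^i=(\eta(W_{r_i}(y))x,\ r_iy)$ for $i\in\{0,\dots,m-1\}$; thus $\omega(x,y)=(\eta(W_\omega(y))x,\omega y)$. The operator preserves connectivity if $\mathcal{X}\rtimes_\eta\mathcal{Y}$ is connected whenever $\mathcal{X}$ is connected. Standing convention: $\mathcal{Y}$ has a spanning tree all of whose darts have trivial voltage. *)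

(* Defs.v *)
From mathcomp Require Import all_boot.
Set Implicit Arguments. Unset Strict Implicit. Unset Printing Implicit Defensive.

Definition far (i j : nat) : bool := (i.+2 <= j) || (j.+2 <= i).

(* An n-premaniplex: flags, and for each colour i the i-dart at each flag,
   encoded by its end x^i = radj i x.  Darts are pairs (x, i); the inverse
   of (x,i) is (x^i, i); semi-edges (x^i = x) and parallel edges allowed. *)
Record premaniplex (n : nat) := Premaniplex {
  flag :> Type;
  radj : 'I_n -> flag -> flag;
  radj_inv : forall i x, radj i (radj i x) = x;
  radj_comm : forall (i j : 'I_n) x, far i j ->
      radj j (radj i (radj j (radj i x))) = x }.

(* A word i_1 ... i_k (in path order) represents r_{i_k} ... r_{i_1}. *)
Definition act (n : nat) (T : Type) (r : 'I_n -> T -> T) (w : seq 'I_n) (x : T) : T :=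
  foldl (fun z i => r i z) x w.

(* Equality in the universal Coxeter group C^n, on path-order words:
   the congruence generated by r_i^2 = 1 and (r_i r_j)^2 = 1 for |i-j|>=2. *)
Inductive coxeq (n : nat) : seq 'I_n -> seq 'I_n -> Prop :=
| coxeq_refl w : coxeq w w
| coxeq_sym w w' : coxeq w w' -> coxeq w' w
| coxeq_trans w1 w2 w3 : coxeq w1 w2 -> coxeq w2 w3 -> coxeq w1 w3
| coxeq_sq a b (i : 'I_n) : coxeq (a ++ [:: i; i] ++ b) (a ++ b)
| coxeq_comm a b (i j : 'I_n) : far i j -> coxeq (a ++ [:: i; j; i; j] ++ b) (a ++ b).

Definition connected (n : nat) (T : Type) (r : 'I_n -> T -> T) : Prop :=
  forall x y : T, exists w : seq 'I_n, act r w x = y.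

(* Automorphism (acting on the right, written as a function). *)
Definition is_aut (n : nat) (T : Type) (r : 'I_n -> T -> T) (g : T -> T) : Prop :=
  bijective g /\ forall i t, g (r i t) = r i (g t).

(* A voltage assignment eta on the fundamental groupoid Pi(Y).  The class
   W_omega(y) is encoded by the pair (y, w) with w a word representing
   omega in C^m; values in C^n are represented by words.
   eta y w is the voltage of W_[w](y). *)
Definition voltage_assignment (n m : nat) (Y : premaniplex m)
  (eta : Y -> seq 'I_m -> seq 'I_n) : Prop :=
  (forall y w w', coxeq w w' -> coxeq (eta y w) (eta y w')) /\
  (* eta(W1 W2) = eta(W2) eta(W1), i.e. in path-order words: eta W1 ++ eta W2 *)
  (forall y w1 w2,
      coxeq (eta y (w1 ++ w2)) (eta y w1 ++ eta (act (@radj _ Y) w1 y) w2)).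

Fixpoint path_in (m : nat) (Y : premaniplex m) (T : Y -> 'I_m -> Prop)
  (y : Y) (w : seq 'I_m) : Prop :=
  match w with
  | [::] => True
  | i :: w' => T y i /\ path_in T (@radj _ Y i y) w'
  end.

Definition spanning_tree (m : nat) (Y : premaniplex m) (T : Y -> 'I_m -> Prop) : Prop :=
  (forall y i, T y i -> T (@radj _ Y i y) i) /\
  (forall y y' : Y, exists w, path_in T y w /\ act (@radj _ Y) w y = y') /\
  (* acyclic: no nonempty closed path without backtracking *)
  (forall (y : Y) (w : seq 'I_m), w != [::] -> path_in T y w ->
       sorted (fun i j => i != j) w -> act (@radj _ Y) w y <> y).

(* Standing convention: a spanning tree whose darts have trivial voltage. *)
Definition trivial_spanning_tree (n m : nat) (Y : premaniplex m)
  (eta : Y -> seq 'I_m -> seq 'I_n) : Prop :=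
  exists T : Y -> 'I_m -> Prop, spanning_tree T /\
    forall y i, T y i -> coxeq (eta y [:: i]) [::].

Definition voltage_operator (n m : nat) (Y : premaniplex m)
  (eta : Y -> seq 'I_m -> seq 'I_n) : Prop :=
  voltage_assignment eta /\ trivial_spanning_tree eta.

Definition sd_adj (n m : nat) (X : premaniplex n) (Y : premaniplex m)
  (eta : Y -> seq 'I_m -> seq 'I_n) (i : 'I_m) (p : X * Y) : X * Y :=
  (act (@radj _ X) (eta p.2 [:: i]) p.1, @radj _ Y i p.2).

Definition preserves_connectivity (n m : nat) (Y : premaniplex m)
  (eta : Y -> seq 'I_m -> seq 'I_n) : Prop :=
  forall X' : premaniplex n, connected (@radj _ X') -> connected (@sd_adj n m X' Y eta).

(* Main.v *)
Require Import Defs.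
From mathcomp Require Import all_boot.
From Stdlib Require Import Classical FunctionalExtensionality ProofIrrelevance.
Set Implicit Arguments. Unset Strict Implicit. Unset Printing Implicit Defensive.

Lemma act_cat n T (r : 'I_n -> T -> T) a b x : act r (a ++ b) x = act r b (act r a x).
Proof. by rewrite /act foldl_cat. Qed.

Lemma act_cons n T (r : 'I_n -> T -> T) i w x : act r (i :: w) x = act r w (r i x).
Proof. by []. Qed.

Lemma coxeq_act n (Z : premaniplex n) w w' : coxeq w w' ->
  forall z, act (@radj _ Z) w z = act (@radj _ Z) w' z.
Proof.
elim=> {w w'}.
- by [].
- by move=> w w' _ IH z; rewrite IH.
- by move=> w1 w2 w3 _ H1 _ H2 z; rewrite H1 H2.
- by move=> a b i z; rewrite !act_cat /= !radj_inv.
- by move=> a b i j Hij z; rewrite !act_cat /= radj_comm.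
Qed.

Lemma act_rev n (Z : premaniplex n) w x :
  act (@radj _ Z) (rev w) (act (@radj _ Z) w x) = x.
Proof.
elim: w x => [|i w IH] x //=.
by rewrite rev_cons -cats1 act_cat IH /= radj_inv.
Qed.

Section U.
Variables (n : nat) (X : premaniplex n).

Definition UF := {F : X -> X | exists w, F = act (@radj _ X) w}.

Lemma UR_proof (i : 'I_n) (F : UF) :
  exists w, (fun x => @radj _ X i (proj1_sig F x)) = act (@radj _ X) w.
Proof.
case: F => F [w E] /=. exists (rcons w i).
by apply: functional_extensionality => x; rewrite E -cats1 act_cat.
Qed.

Definition UR (i : 'I_n) (F : UF) : UF := exist _ _ (UR_proof i F).

Lemma UF_eq (F G : UF) : proj1_sig F = proj1_sig G -> F = G.
Proof.
case: F => F pF; case: G => G pG /= E; subst G.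
by rewrite (proof_irrelevance _ pF pG).
Qed.

Lemma UR_inv i F : UR i (UR i F) = F.
Proof.
apply: UF_eq => /=; apply: functional_extensionality => x; exact: radj_inv.
Qed.

Lemma UR_comm (i j : 'I_n) F : far i j -> UR j (UR i (UR j (UR i F))) = F.
Proof.
move=> H; apply: UF_eq => /=; apply: functional_extensionality => x.
exact: radj_comm.
Qed.

Definition UX : premaniplex n := @Premaniplex n UF UR UR_inv UR_comm.

Lemma val_act_U w (F : UF) :
  proj1_sig (act UR w F) = fun x => act (@radj _ X) w (proj1_sig F x).
Proof. by elim: w F => [|i w IH] F //=; rewrite IH. Qed.

Lemma UX_conn : connected (@radj _ UX).
Proof.
move=> F G; case: (proj2_sig F) => w Fw; case: (proj2_sig G) => w' Gw'.
exists (rev w ++ w'); apply: UF_eq.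
rewrite /= val_act_U Fw Gw'; apply: functional_extensionality => x.
by rewrite act_cat act_rev.
Qed.

Definition Uid : UF := exist _ (act (@radj _ X) [::]) (ex_intro _ [::] erefl).
Definition Uj (j : 'I_n) : UF := exist _ (act (@radj _ X) [:: j]) (ex_intro _ [:: j] erefl).

End U.

Fixpoint V n m (Y : premaniplex m) (eta : Y -> seq 'I_m -> seq 'I_n) (y : Y)
  (u : seq 'I_m) : seq 'I_n :=
  match u with
  | [::] => [::]
  | i :: u' => eta y [:: i] ++ V eta (@radj _ Y i y) u'
  end.

Lemma sd_act n m (Z : premaniplex n) (Y : premaniplex m) eta u (z : Z) (y : Y) :
  act (@sd_adj n m Z Y eta) u (z, y) =
  (act (@radj _ Z) (V eta y u) z, act (@radj _ Y) u y).
Proof.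
elim: u z y => [|i u IH] z y //=.
by rewrite /sd_adj /= IH act_cat.
Qed.

Theorem lemma4p1 (n m : nat) (X : premaniplex n) (Y : premaniplex m)
  (eta : Y -> seq 'I_m -> seq 'I_n)
  (Hop : voltage_operator eta)
  (HX : connected (@radj _ X))
  (Hpres : preserves_connectivity eta)
  (g : X * Y -> X * Y)
  (Hg : is_aut (@sd_adj n m X Y eta) g)
  (HgY : forall p : X * Y, (g p).2 = p.2) :
  exists a : X -> X, is_aut (@radj _ X) a /\ forall (x : X) (y : Y), g (x, y) = (a x, y).
Proof.
case: Hop => _ [T [[_ [Tspan _]] Ttriv]].
have gconst : forall h : X * Y -> X * Y,
    (forall i p, h (@sd_adj n m X Y eta i p) = @sd_adj n m X Y eta i (h p)) ->
    (forall p, (h p).2 = p.2) ->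
    forall x w y, path_in T y w ->
      (h (x, act (@radj _ Y) w y)).1 = (h (x, y)).1.
  move=> h hc hY x; elim=> [|i w IH] y //= [Ti Hp].
  rewrite IH //.
  have -> : (x, @radj _ Y i y) = @sd_adj n m X Y eta i (x, y).
    by rewrite /sd_adj /= (coxeq_act (Ttriv y i Ti)).
  by rewrite hc /sd_adj /= hY (coxeq_act (Ttriv y i Ti)).
have gall : forall h : X * Y -> X * Y,
    (forall i p, h (@sd_adj n m X Y eta i p) = @sd_adj n m X Y eta i (h p)) ->
    (forall p, (h p).2 = p.2) ->
    forall x y y0, h (x, y) = ((h (x, y0)).1, y).
  move=> h hc hY x y y0.
  case: (Tspan y0 y) => w [Hp <-].
  by rewrite [h _]surjective_pairing hY gconst.
case: (classic (exists y0 : Y, True)) => [[y0 _]|NY]; last first.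
  exists id; split.
    by split => //; exists id.
  by move=> x y; exfalso; apply: NY; exists y.
case: Hg => [[h hg gh] gc].
have hY : forall p, (h p).2 = p.2 by move=> p; rewrite -{2}(gh p) HgY.
have hc : forall i p, h (@sd_adj n m X Y eta i p) = @sd_adj n m X Y eta i (h p).
  by move=> i p; apply: (can_inj hg); rewrite gc !gh.
have gact : forall u p, g (act (@sd_adj n m X Y eta) u p) =
                        act (@sd_adj n m X Y eta) u (g p).
  by elim=> [|i u IH] p //=; rewrite IH gc.
pose a x := (g (x, y0)).1.
have ga : forall x y, g (x, y) = (a x, y) by move=> x y; exact: gall.
exists a; split; last exact: ga.
split.
  exists (fun z => (h (z, y0)).1).
    by move=> x; rewrite /a -ga hg.
  move=> z; rewrite /a -(gall h hc hY) gh //.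
move=> j x.
case: (Hpres (UX X) (@UX_conn n X) (Uid X, y0) (Uj X j, y0)) => u Hu.
rewrite sd_act in Hu; case: Hu => H1 H2.
have H3 := f_equal (fun F => proj1_sig F x) H1.
have H4 := f_equal (fun F => proj1_sig F (a x)) H1.
rewrite /= val_act_U /= in H3 H4.
have := gact u (x, y0).
rewrite sd_act H2 H3 !ga sd_act H2 H4 /=.
by case.
Qed.
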